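(* Consider robust dynamic pricing with horizon $T$, valuation $v^\star\in[0,1)$, and feedback corrupted in at most $C$ rounds, and run the meta-algorithm described in the context with an arbitrary commitment subroutine. Then the number of commit failures on incorrect leaves satisfies \[ N_{\textsc{F}} \le \lceil\log_2 T\rceil + C + N_{\textsc{T}}, \] and the regret satisfies \[ R_T \le \sum_{\ell\in\mathcal L} R(\ell) + 3\lceil\log_2 T\rceil + 6C + 3N_{\textsc{T}}. \]
   Context: Robust dynamic pricing: there are $T$ rounds and an unknown valuation $v^\star\in[0,1)$. At each round $t$ the seller posts a price $p_t\in[0,1]$ (chosen, possibly at random, based on past observations). The true sale indicator is $y_t=\mathbbm 1\{p_t\le v^\star\}$; the seller observes $\sigma_t\in\{0,1\}$, and round $t$ is corrupted if $\sigma_t\ne y_t$. At most $C$ rounds are corrupted: $|\{t\in[T]:\sigma_t\neq y_t\}|\le C$. The adversary decides whether to corrupt round $t$ based on the history and on the seller's distribution over $p_t$, but not on the realized $p_t$ (how it corrupts may depend on the realized price). Revenue is $r_t=p_t\,\mathbbm 1\{p_t\le v^\star\}$ and regret is $R_T=T v^\star-\sum_{t=1}^T r_t$. Meta-algorithm: let $D=\lceil\log_2 T\rceil$. Consider the complete binary tree of intervals of depth $D$ whose root is $[0,1)$ and in which each non-leaf node $[L,R)$ has children $[L,M)$ and $[M,R)$ with $M=(L+R)/2$; the nodes at depth $D$ are the leaves, forming the set $\mathcal L$ (each of length at most $1/T$), and $\ell^\star$ denotes the unique leaf containing $v^\star$. The algorithm keeps a current node $I$, initially the root, and repeats until the horizon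 ends: if $I=[L,R)$ is not a leaf, it performs a safety check — post $L$ and observe $\sigma_L$, then post $R$ and observe $\sigma_R$; the check fails if $\sigma_L=0$ or $\sigma_R=1$ (by convention, the query at $L=0$ and the query at $R=1$ always count as passing). If the check fails, $I$ is replaced by its parent; otherwise the algorithm posts $M=(L+R)/2$, observes $\sigma_M$, and replaces $I$ by $[M,R)$ if $\sigma_M=1$ and by $[L,M)$ if $\sigma_M=0$. If $I$ is a leaf, the algorithm calls a commitment subroutine on $I$, which posts prices on consecutive rounds and either continues until the horizon ends or returns FAIL, in which case $I$ is replaced by its parent. For a leaf $\ell$, $Q(\ell)$ is the set of rounds during which the commitment subroutine runs on $\ell$, and $R(\ell)=\sum_{t\in Q(\ell)}(v^\star-p_t\mathbbm 1\{p_t\le v^\star\})$. $N_{\textsc{T}}$ is the number of times the commitment subroutine returns FAIL on $\ell^\star$, and $N_{\textsc{F}}$ is the number of times it returns FAIL on a leaf different from $\ell^\star$. *)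

(* Defs.v *)
From HB Require Import structures.
From mathcomp Require Import all_boot all_order all_algebra.
From mathcomp Require Import reals.
Set Implicit Arguments. Unset Strict Implicit. Unset Printing Implicit Defensive.
Import Order.TTheory GRing.Theory Num.Theory.
Local Open Scope ring_scope.

(* A node of the dyadic tree: (depth d, index k), the interval
   [k/2^d, (k+1)/2^d).  The root is (0,0).  *)
Definition node := (nat * nat)%type.

Section Pricing.
Variable R : realType.

(* history: sequence of (posted price, observed feedback sigma) *)
Definition hist := seq (R * bool).

Definition nodeL (n : node) : R := n.2%:R / 2%:R ^+ n.1.
Definition nodeR (n : node) : R := n.2.+1%:R / 2%:R ^+ n.1.
Definition nodeM (n : node) : R := (n.2.*2.+1)%:R / 2%:R ^+ n.1.+1.
(* parent; convention: the parent of the root is the root (only relevant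
   when the tree has depth 0, i.e. T = 1) *)
Definition parent (n : node) : node := (n.1.-1, n.2./2).
Definition lchild (n : node) : node := (n.1.+1, n.2.*2).
Definition rchild (n : node) : node := (n.1.+1, n.2.*2.+1).
Definition in_node (v : R) (n : node) : bool := (nodeL n <= v) && (v < nodeR n).

(* phase of the meta-algorithm within the current node:
   PhL   : about to post L (safety check, first query)
   PhR b : about to post R; b = whether the query at L passed
   PhM   : check passed, about to post M
   PhC loc : commitment subroutine running, loc = history of this call *)
Inductive phase := PhL | PhR of bool | PhM | PhC of hist.
Definition state := (node * phase)%type.

(* one round of the run: posted price, observed feedback, the leaf on which
   the commitment subroutine posted this price (if any), and the leaf on
   which the commitment subroutine returned FAIL at the start of this round
   (if any). *)
Record rec := Rec { rprice : R; rsig : bool; rcommit : option node;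
                    rfail : option node }.

Variables (D : nat)
  (* commitment subroutine: price posted given leaf, global history and the
     history of the current call *)
  (cprice : node -> hist -> hist -> R)
  (* commitment subroutine: whether to return FAIL (consulted before each
     round of a call except its first) *)
  (cstop : node -> hist -> hist -> bool)
  (* adversary: observed feedback given the history and the posted price *)
  (adv : hist -> R -> bool).

Definition enter (n : node) : state :=
  if n.1 == D then (n, PhC [::]) else (n, PhL).

Definition resolve (s : state) (h : hist) : state * option node :=
  let: (n, ph) := s in
  match ph with
  | PhC loc => if (loc != [::]) && cstop n h loc
               then (enter (parent n), Some n) else (s, None)
  | _ => (s, None)
  end.

Definition post (s : state) (h : hist) : R * option node :=
  let: (n, ph) := s in
  match ph with
  | PhL => (nodeL n, None)
  | PhR _ => (nodeR n, None)
  | PhM => (nodeM n, None)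
  | PhC loc => (cprice n h loc, Some n)
  end.

Definition next (s : state) (p : R) (sg : bool) : state :=
  let: (n, ph) := s in
  match ph with
  | PhL => (n, PhR ((nodeL n == 0) || sg))
  | PhR bL => if bL && ((nodeR n == 1) || ~~ sg) then (n, PhM)
              else enter (parent n)
  | PhM => enter (if sg then rchild n else lchild n)
  | PhC loc => (n, PhC (rcons loc (p, sg)))
  end.

Fixpoint run (k : nat) (s : state) (h : hist) : seq rec :=
  match k with
  | 0 => [::]
  | k'.+1 =>
    let: (s1, f) := resolve s h in
    let: (p, c) := post s1 h in
    let sg := adv h p in
    Rec p sg c f :: run k' (next s1 p sg) (rcons h (p, sg))
  end.

Definition trace (T : nat) : seq rec := run T (enter (0, 0)%N) [::].

End Pricing.

Section Quantities.
Variable R : realType.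
Implicit Types (v : R) (tr : seq (rec R)).

Definition revenue v (r : rec R) : R := if rprice r <= v then rprice r else 0.

Definition corruptions v tr : nat :=
  count (fun r => rsig r != (rprice r <= v)) tr.

Definition regret (T : nat) v tr : R :=
  T%:R * v - \sum_(r <- tr) revenue v r.

Definition leafRegret (D k : nat) v tr : R :=
  \sum_(r <- tr | rcommit r == Some (D, k)) (v - revenue v r).

Definition NT v tr : nat :=
  count (fun r => if rfail r is Some n then in_node v n else false) tr.
Definition NF v tr : nat :=
  count (fun r => if rfail r is Some n then ~~ in_node v n else false) tr.
End Quantities.

(* Main.v *)
Require Import Defs.
From HB Require Import structures.
From mathcomp Require Import all_boot all_order all_algebra.
From mathcomp Require Import reals zify ring lra.
Set Implicit Arguments. Unset Strict Implicit. Unset Printing Implicit Defensive.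
Import Order.TTheory GRing.Theory Num.Theory.
Local Open Scope ring_scope.


Section Nodes.
Variables (R : realType) (v : R).
Hypotheses (hv0 : 0 <= v) (hv1 : v < 1).

Definition W (d : nat) : R := v * 2%:R ^+ d.

Lemma pow2_gt0 (d : nat) : 0 < (2%:R : R) ^+ d.
Proof. by apply: exprn_gt0. Qed.

Lemma WS d : W d.+1 = 2 * W d.
Proof. by rewrite /W exprS mulrCA. Qed.

Lemma nodeL_le d k : (nodeL R (d,k) <= v) = (k%:R <= W d).
Proof. by rewrite /nodeL /= ler_pdivrMr ?pow2_gt0. Qed.

Lemma nodeR_le d k : (nodeR R (d,k) <= v) = (k.+1%:R <= W d).
Proof. by rewrite /nodeR /= ler_pdivrMr ?pow2_gt0. Qed.

Lemma nodeM_le d k : (nodeM R (d,k) <= v) = ((k.*2.+1)%:R <= W d.+1).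
Proof. by rewrite /nodeM /= ler_pdivrMr ?pow2_gt0. Qed.

Lemma inE d k : in_node v (d,k) = (k%:R <= W d) && (W d < k.+1%:R).
Proof.
by rewrite /in_node /nodeL /nodeR /= ler_pdivrMr ?ltr_pdivlMr ?pow2_gt0.
Qed.

Lemma nodeL_ge0 n : 0 <= nodeL R n :> R.
Proof. by rewrite /nodeL divr_ge0 // exprn_ge0. Qed.
Lemma nodeR_ge0 n : 0 <= nodeR R n :> R.
Proof. by rewrite /nodeR divr_ge0 // exprn_ge0. Qed.
Lemma nodeM_ge0 n : 0 <= nodeM R n :> R.
Proof. by rewrite /nodeM divr_ge0 // exprn_ge0. Qed.

Lemma W_ge0 d : 0 <= W d.
Proof. by rewrite /W mulr_ge0 // exprn_ge0. Qed.

Lemma in_root : in_node v (0,0)%N.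
Proof. rewrite inE /W expr0 mulr1 hv0 /=. by []. Qed.

Lemma natS2 (k : nat) : (k.*2.+1)%:R = 2 * k%:R + 1 :> R.
Proof. by rewrite -addn1 natrD -muln2 natrM mulrC. Qed.
Lemma nat2 (k : nat) : (k.*2)%:R = 2 * k%:R :> R.
Proof. by rewrite -muln2 natrM mulrC. Qed.

Lemma in_parent d k : in_node v (d.+1, k) -> in_node v (d, k./2).
Proof.
rewrite !inE WS => /andP[h1 h2].
have hk : k%:R = 2 * (k./2)%:R + (odd k)%:R :> R.
  by rewrite -nat2 -natrD addnC odd_double_half.
have ho : (odd k)%:R <= 1 :> R by case: (odd k).
have ho0 : 0 <= (odd k)%:R :> R by [].
rewrite hk in h1 h2.
rewrite -addn1 natrD in h2.
apply/andP; split; lra.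
Qed.

Lemma in_child d k : in_node v (d,k) ->
  in_node v (if nodeM R (d,k) <= v then rchild (d,k) else lchild (d,k)).
Proof.
rewrite inE nodeM_le => /andP[h1 h2].
have e1 : k.+1%:R = k%:R + 1 :> R by rewrite -addn1 natrD.
have e2 : (k.*2.+2)%:R = 2 * k%:R + 2 :> R.
  by rewrite -addn2 natrD nat2.
rewrite e1 in h2.
case: ifP => hM; rewrite /rchild /lchild /= inE WS.
  move: hM; rewrite /= (natS2 k) WS => hM.
  rewrite e2.
  apply/andP; split; lra.
move/negbT: hM; rewrite /= -ltNge (natS2 k) WS => hM.
rewrite /= (nat2 k) hM andbT ler_pM2l //.
Qed.

Lemma out_L_lt (n : node) : ~~ in_node v n -> nodeL R n <= v -> nodeR R n <= v.
Proof.
by rewrite /in_node => /negP hn hL; rewrite leNgt; apply/negP => hR; apply: hn; rewrite hL hR.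
Qed.

Lemma nodeR_ne1 (n : node) : nodeR R n <= v -> (nodeR R n == 1) = false.
Proof. by move=> h; apply/negbTE/eqP => e; rewrite e in h; have := lt_le_trans hv1 h; rewrite ltxx. Qed.

Lemma in_R_gt (n : node) : in_node v n -> (nodeR R n <= v) = false.
Proof. by case/andP => _ h; apply/negbTE; rewrite -ltNge. Qed.
Lemma in_L_le (n : node) : in_node v n -> nodeL R n <= v.
Proof. by case/andP. Qed.

End Nodes.


Section Pot.
Variables (R : realType) (v : R) (D : nat).
Hypotheses (hv0 : 0 <= v) (hv1 : v < 1).

Fixpoint cdep (d k : nat) : nat :=
  if in_node v (d,k) then d else if d is d'.+1 then cdep d' k./2 else 0%N.

Lemma cdep_le d k : (cdep d k <= d)%N.
Proof.
elim: d k => [|d IH] k /=; case: ifP => // _.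
exact: leq_trans (IH _) (leqnSn _).
Qed.

Lemma cdep_in d k : in_node v (d,k) -> cdep d k = d.
Proof. by case: d => [|d] /= ->. Qed.

Lemma cdep_out d k : ~~ in_node v (d.+1,k) -> cdep d.+1 k = cdep d k./2.
Proof. by move=> /= /negbTE ->. Qed.

Definition Phi (n : node) : nat := (D + n.1 - 2 * cdep n.1 n.2)%N.

Lemma Phi_ge d k : (D - d <= Phi (d,k))%N.
Proof. rewrite /Phi /=; have := cdep_le d k; lia. Qed.

Lemma k0 k : (k < 2 ^ 0)%N -> k = 0%N.
Proof. by rewrite expn0; case: k. Qed.

Lemma Phi_parent_in d k : in_node v (d,k) -> (k < 2 ^ d)%N -> (d <= D)%N ->
  (Phi (parent (d,k)) <= Phi (d,k) + 1)%N.
Proof.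
case: d => [|d] hin hk hd.
  by rewrite (k0 hk) /parent /=; lia.
have hp := in_parent hin.
rewrite /parent /Phi (cdep_in hin) /= (cdep_in hp); lia.
Qed.

Lemma Phi_parent_out d k : ~~ in_node v (d,k) -> (k < 2 ^ d)%N -> (d <= D)%N ->
  (Phi (parent (d,k)) + 1 = Phi (d,k))%N.
Proof.
case: d => [|d] hin hk hd.
  by move: hin; rewrite (k0 hk) (in_root hv0).
have := cdep_le d k./2.
rewrite /parent /Phi (cdep_out hin) /=; lia.
Qed.

Lemma child_phi d j : (d < D)%N ->
  (in_node v (d.+1,j) -> in_node v (d, j./2) /\ (Phi (d.+1,j) + 1 = Phi (d,j./2))%N)
  /\ (~~ in_node v (d.+1,j) -> Phi (d.+1,j) = (Phi (d,j./2) + 1)%N).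
Proof.
move=> hd; split.
  move=> hin; have hp := in_parent hin; split => //.
  rewrite /Phi (cdep_in hin) /= (cdep_in hp); lia.
move=> hout; have := cdep_le d j./2.
rewrite /Phi (cdep_out hout) /=; lia.
Qed.

Definition expL (n : node) : bool := nodeL R n <= v.

Definition P (s : state R) : nat :=
  let: (n, ph) := s in
  match ph with
  | PhL => Phi n
  | PhR b => (Phi n + (b != expL n))%N
  | PhM => (Phi n + ~~ in_node v n)%N
  | PhC _ => Phi n
  end.

Definition Q (s : state R) : nat :=
  let: (n, ph) := s in
  match ph with
  | PhL => (3 * Phi n)%N
  | PhR b => if b == expL n then (3 * Phi n - 1)%N else (3 * Phi n + 5)%N
  | PhM => if in_node v n then (3 * Phi n - 2)%N else (3 * Phi n + 4)%N
  | PhC _ => (3 * Phi n)%N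
  end.

Definition WF (s : state R) : bool :=
  let: (n, ph) := s in
  [&& (n.1 <= D)%N, (n.2 < 2 ^ n.1)%N &
      (if ph is PhC _ then n.1 == D else (n.1 < D)%N)].

Definition corr (r : rec R) : bool := rsig r != (rprice r <= v).
Definition ntr (r : rec R) : bool := if rfail r is Some n then in_node v n else false.
Definition nfr (r : rec R) : bool := if rfail r is Some n then ~~ in_node v n else false.
Definition leafr (r : rec R) : bool :=
  if rcommit r is Some n then (n.1 == D) && (n.2 < 2 ^ D)%N else false.

Lemma bfact (n : node) sg :
  (((nodeL R n == 0) || sg) != expL n) -> (sg != (nodeL R n <= v)).
Proof.
rewrite /expL; case: sg; case hL: (nodeL R n <= v) => //=; rewrite ?orbT ?orbF //.
by case/boolP: (nodeL R n == 0) => [/eqP e|] //; rewrite e hv0 in hL.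
Qed.

Variables (cprice : node -> hist R -> hist R -> R)
  (cstop : node -> hist R -> hist R -> bool) (adv : hist R -> R -> bool).
Hypothesis hc : forall n h loc, 0 <= cprice n h loc <= 1.

Definition round (s : state R) (h : hist R) : rec R * state R :=
  let: (s1, f) := resolve D cstop s h in
  let: (p, c) := post cprice s1 h in
  let sg := adv h p in
  (Rec p sg c f, Defs.next D s1 p sg).

Lemma run_round k s h : run D cprice cstop adv k.+1 s h =
  (round s h).1 :: run D cprice cstop adv k (round s h).2
     (rcons h (rprice (round s h).1, rsig (round s h).1)).
Proof.
rewrite /= /round; case: (resolve D cstop s h) => s1 f.
by case: (post cprice s1 h).
Qed.

End Pot.


Section Step.
Variables (R : realType) (v : R) (D : nat).
Hypotheses (hv0 : 0 <= v) (hv1 : v < 1).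
Variables (cprice : node -> hist R -> hist R -> R)
  (cstop : node -> hist R -> hist R -> bool) (adv : hist R -> R -> bool).
Hypothesis hc : forall n h loc, 0 <= cprice n h loc <= 1.

Notation Phi := (Phi v D).
Notation P := (P v D).
Notation Q := (Q v D).
Notation WF := (@WF R D).

Lemma enter_WF (c : node) : WF (enter R D c) = (c.1 <= D)%N && (c.2 < 2 ^ c.1)%N.
Proof.
case: c => a b; rewrite /enter /WF /=.
case: eqP => [->|ne] /=; first by rewrite leqnn eqxx /= andbT.
case: (leqP a D) => ha /=; last by [].
have -> : (a < D)%N by rewrite ltn_neqAle ha andbT; apply/eqP.
by rewrite andbT.
Qed.

Lemma enter_P (c : node) : P (enter R D c) = Phi c.
Proof. by rewrite /enter; case: eqP. Qed.
Lemma enter_Q (c : node) : Q (enter R D c) = (3 * Phi c)%N.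
Proof. by rewrite /enter; case: eqP. Qed.

Lemma child_bound d j : (d < D)%N ->
  [/\ (Phi (d.+1,j) <= Phi (d,j./2) + 1)%N,
      (~~ in_node v (d, j./2) -> Phi (d.+1,j) = Phi (d,j./2) + 1)%N &
      (in_node v (d.+1,j) -> Phi (d.+1,j) + 1 = Phi (d,j./2))%N].
Proof.
move=> hd; have [h1 h2] := child_phi hv0 hv1 j hd.
split.
- case hin: (in_node v (d.+1,j)); first by have [_ <-] := h1 hin; lia.
  by rewrite h2 ?hin.
- by move=> hn; apply: h2; apply: contra hn => /h1 [].
- by move=> /h1 [].
Qed.

Lemma childcase d k j (corrb : bool) : (d < D)%N -> (k < 2 ^ d)%N -> j./2 = k ->
  (j < 2 ^ d.+1)%N ->
  (in_node v (d,k) -> ~~ corrb -> in_node v (d.+1,j)) ->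
  [/\ WF (enter R D (d.+1,j)),
      (P (enter R D (d.+1,j)) <= Phi (d,k) + ~~ in_node v (d,k) + corrb)%N &
      (1 + Q (enter R D (d.+1,j)) <=
         (if in_node v (d,k) then 3 * Phi (d,k) - 2 else 3 * Phi (d,k) + 4)
         + 6 * corrb)%N].
Proof.
move=> hd hk hj hjd hc'.
have [b1 b2 b3] := child_bound j hd; rewrite hj in b1 b2 b3.
have hP := Phi_ge D hv0 hv1 d k.
rewrite enter_WF enter_P enter_Q /= hjd andbT.
split => //.
  case hin: (in_node v (d,k)) => /=; last by rewrite b2 ?hin //; lia.
  by move: b1; case: corrb hc' => /=; lia.
case hin: (in_node v (d,k)) => /=; last by rewrite b2 ?hin //; lia.
case: corrb hc' => /= hc'; first lia.
have := b3 (hc' hin isT); lia.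
Qed.

Lemma step s h : WF s -> let rs := round D cprice cstop adv s h in
  [/\ WF rs.2, (nfr v rs.1 + P rs.2 <= P s + corr v rs.1 + ntr v rs.1)%N,
      (~~ leafr D rs.1 + Q rs.2 <= Q s + 6 * corr v rs.1 + 3 * ntr v rs.1)%N
      & 0 <= rprice rs.1].
Proof.
case: s => [[d k] ph]; rewrite /WF /= => /and3P[hd hk hph].
case: ph hph => [|b| |loc] hph; rewrite /round /=.
-
  rewrite /corr /= hd hk hph nodeL_ge0.
  have := bfact hv0 (n:=(d,k)) (sg:=adv h (nodeL R (d,k))).
  have := Phi_ge D hv0 hv1 d k.
  set sg := adv h _; set e := expL v _.
  case: (_ == e); case: (sg == _) => /= hP hb; split => //; try lia; by have := hb isT.
-
  rewrite /corr /= nodeR_ge0.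
  have hP := Phi_ge D hv0 hv1 d k.
  set sg := adv h _.
  case E: (b && _).
  +
    rewrite /= hd hk hph /=.
    have key : ~~ in_node v (d,k) -> (b != expL v (d,k)) || (sg != (nodeR R (d,k) <= v)).
      move=> hout; case hL: (nodeL R (d,k) <= v).
        have hR := out_L_lt hout hL.
        move: E; rewrite (nodeR_ne1 hv1 hR) hR /= => /andP[_ hs].
        by rewrite (negbTE hs) orbT.
      by move: E => /andP[-> _]; rewrite /expL hL.
    move: key; case: (in_node v (d,k)) => /=;
    case: (b == _); case: (sg == _) => /= hk'; split => //; try lia; by have := hk' isT.
  +
    have hpd : (d.-1 == D) = false by apply/negbTE; lia.
    have hWF : WF (enter R D (parent (d,k))).
      rewrite enter_WF /parent /=; clear -hd hk hph; case: d hd hk hph => [|d] hd hk hph.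
        by rewrite (k0 hk).
      by move: hk; rewrite expnS /=; lia.
    rewrite enter_P enter_Q.
    case hin: (in_node v (d,k)).
    * have hp := Phi_parent_in hv0 hv1 hin hk hd.
      have key : (b != expL v (d,k)) || (sg != (nodeR R (d,k) <= v)).
        rewrite /expL (in_L_le hin) (in_R_gt hin).
        by case: b E => //= /negbT; rewrite negb_or negbK => /andP[_ ->].
      move: key; case: (b == _); case: (sg == _) => /= hk'; split => //; try lia; by have := hk' isT.
    * have hp := Phi_parent_out hv0 hv1 (negbT hin) hk hd.
      case: (b == _); case: (sg == _) => /=; split => //; lia.
-
  rewrite /corr /= nodeM_ge0.
  have hic := in_child (v:=v) (d:=d) (k:=k).
  case hs: (adv h _); case hM: (nodeM R (d,k) <= v); rewrite hM in hic;
    rewrite /rchild /lchild /=.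
  + have [w1 w2 w3] := childcase (j:=k.*2.+1) (corrb:=false) hph hk
      ltac:(lia) ltac:(rewrite expnS; lia) (fun h _ => hic h).
    split => //; lia.
  + have [w1 w2 w3] := childcase (j:=k.*2.+1) (corrb:=true) hph hk
      ltac:(lia) ltac:(rewrite expnS; lia) (fun _ h => False_ind _ (notF h)).
    split => //; lia.
  + have [w1 w2 w3] := childcase (j:=k.*2) (corrb:=true) hph hk
      ltac:(lia) ltac:(rewrite expnS; lia) (fun _ h => False_ind _ (notF h)).
    split => //; lia.
  + have [w1 w2 w3] := childcase (j:=k.*2) (corrb:=false) hph hk
      ltac:(lia) ltac:(rewrite expnS; lia) (fun h _ => hic h).
    split => //; lia.
-
  move/eqP: hph => hdD.
  case E: (_ && _) => /=.
  + case: d hd hk hdD E => [|d'] hd hk hdD E.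
    * rewrite (k0 hk) -hdD /enter /=.
      have -> : parent (0%N,0%N) = (0%N,0%N) by [].
      rewrite /nfr /ntr /= (in_root hv0 hv1) /=.
      have := hc (0%N,0%N) h [::]; case/andP => hc0 _.
      rewrite hc0; split => //; lia.
    * have hpd : (d' == D) = false by apply/negbTE; lia.
      rewrite /enter /parent /= hpd /= /corr /= nodeL_ge0.
      rewrite /nfr /ntr /=.
      have hW : [&& (d' <= D)%N, (k./2 < 2 ^ d')%N & (d' < D)%N].
        by move: hk; rewrite expnS => hk; apply/and3P; split; lia.
      rewrite hW.
      have := bfact hv0 (n:=(d',k./2)) (sg:=adv h (nodeL R (d',k./2))).
      have hP := Phi_ge D hv0 hv1 d' k./2.
      case hin: (in_node v (d'.+1,k)) => /=.
      - have hp := Phi_parent_in hv0 hv1 hin hk hd; rewrite /parent /= in hp.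
        case: (_ == expL v _); case: (adv h _ == _) => /= hb; split => //; try lia; by have := hb isT.
      - have hp := Phi_parent_out hv0 hv1 (negbT hin) hk hd; rewrite /parent /= in hp.
        case: (_ == expL v _); case: (adv h _ == _) => /= hb; split => //; try lia; by have := hb isT.
  + rewrite /corr /= hd hk hdD eqxx /=.
    have := hc (d,k) h loc; case/andP => hc0 _.
    rewrite /leafr /= -hdD hk eqxx /=; split => //; lia.
Qed.
End Step.


Section Run.
Variables (R : realType) (v : R) (D : nat).
Hypotheses (hv0 : 0 <= v) (hv1 : v < 1).
Variables (cprice : node -> hist R -> hist R -> R)
  (cstop : node -> hist R -> hist R -> bool) (adv : hist R -> R -> bool).
Hypothesis hc : forall n h loc, 0 <= cprice n h loc <= 1.

Lemma run_bound k s h : WF D s -> let tr := run D cprice cstop adv k s h in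
  [/\ (NF v tr <= P v D s + corruptions v tr + NT v tr)%N,
      (count (predC (leafr D)) tr <= Q v D s + 6 * corruptions v tr + 3 * NT v tr)%N &
      all (fun r => 0 <= rprice r) tr].
Proof.
elim: k s h => [|k IH] s h hW; first by split.
cbv zeta; rewrite run_round.
have [hW' h1 h2 h3] := step hv0 hv1 cstop adv hc h hW.
set r := (round D cprice cstop adv s h).1 in h1 h2 h3 *.
have [i1 i2 i3] := IH _ (rcons h (rprice r, rsig r)) hW'.
set tr := run _ _ _ _ _ _ _ in i1 i2 i3 *.
have -> : NF v (r :: tr) = (nfr v r + NF v tr)%N by [].
have -> : NT v (r :: tr) = (ntr v r + NT v tr)%N by [].
have -> : corruptions v (r :: tr) = (corr v r + corruptions v tr)%N by [].
have -> : count (predC (leafr D)) (r :: tr) = (~~ leafr D r + count (predC (leafr D)) tr)%N by [].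
rewrite /= h3 i3; split => //; lia.
Qed.

Lemma size_run k s h : size (run D cprice cstop adv k s h) = k.
Proof. by elim: k s h => [|k IH] s h //; rewrite run_round /= IH. Qed.

End Run.

Section Sums.
Variables (R : realType) (v : R) (D : nat).
Hypotheses (hv0 : 0 <= v) (hv1 : v < 1).

Lemma regret_split T tr : size tr = T ->
  regret T v tr = \sum_(r <- tr | leafr D r) (v - revenue v r)
                + \sum_(r <- tr | ~~ leafr D r) (v - revenue v r).
Proof.
move=> <-; rewrite /regret; elim: tr => [|r tr IH]; first by rewrite !big_nil mulr0n mul0r subr0 addr0.
rewrite !big_cons /=.
have -> : (size tr).+1%:R * v - (revenue v r + \sum_(j <- tr) revenue v j)
   = (v - revenue v r) + ((size tr)%:R * v - \sum_(j <- tr) revenue v j).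
  by rewrite -addn1 natrD; ring.
rewrite IH; case: (leafr D r) => /=; ring.
Qed.

Lemma leaf_sum tr : \sum_(k < 2 ^ D) leafRegret D k v tr
   = \sum_(r <- tr | leafr D r) (v - revenue v r).
Proof.
elim: tr => [|r tr IH].
  by rewrite big_nil; apply: big1 => k _; rewrite /leafRegret big_nil.
rewrite [in RHS]big_mkcond big_cons -big_mkcond -IH /leafRegret.
under eq_bigr => k _ do rewrite big_mkcond big_cons -big_mkcond.
rewrite big_split /=; congr (_ + _).
rewrite /leafr; case: (rcommit r) => [[a b]|]; last by rewrite big1.
case hab: ((a == D) && (b < 2 ^ D)%N).
  case/andP: hab => /eqP -> hb.
  rewrite (bigD1 (Ordinal hb)) //= eqxx big1 ?addr0 // => k hk.
  case: eqP => // [[e]]; move: hk; suff -> : k = Ordinal hb by rewrite eqxx.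
  by apply: val_inj; rewrite /= e.
rewrite big1 // => k _; case: eqP => // [[e1 e2]].
by move: hab; rewrite e1 e2 eqxx ltn_ord.
Qed.

Lemma nonleaf_bound tr : all (fun r => 0 <= rprice r) tr ->
  \sum_(r <- tr | ~~ leafr D r) (v - revenue v r) <= (count (predC (leafr D)) tr)%:R.
Proof.
elim: tr => [|r tr IH]; first by rewrite big_nil.
rewrite big_cons /= => /andP[hp /IH {}IH].
case: (leafr D r) => /=; first by rewrite add0n.
rewrite add1n -addn1 natrD addrC lerD //.
rewrite /revenue; case: ifP => h; last by rewrite subr0 ltW.
by rewrite lerBlDr; apply: le_trans (ltW hv1) _; rewrite lerDl.
Qed.

End Sums.


Unset Implicit Arguments.
Theorem theorem3p4 (R : realType) (T C : nat) (v : R)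
    (cprice : node -> hist R -> hist R -> R)
    (cstop : node -> hist R -> hist R -> bool)
    (adv : hist R -> R -> bool) :
  (0 < T)%N -> 0 <= v < 1 ->
  (forall n h loc, 0 <= cprice n h loc <= 1) ->
  let D := up_log 2 T in
  let tr := trace D cprice cstop adv T in
  (corruptions v tr <= C)%N ->
  (NF v tr <= D + C + NT v tr)%N /\
  regret T v tr <= \sum_(k < 2 ^ D) leafRegret D k v tr
                   + 3 * D%:R + 6 * C%:R + 3 * (NT v tr)%:R.
Proof.
move=> hT /andP[hv0 hv1] hc D tr hC.
have hW : WF D (enter R D (0%N,0%N)) by rewrite enter_WF /= expn0.
have [i1 i2 i3] := run_bound hv0 hv1 cstop adv hc T [::] hW.
rewrite enter_P enter_Q in i1 i2.
have hPhi : Phi v D (0%N,0%N) = D by rewrite /Phi /=; case: ifP => _; lia.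
rewrite hPhi in i1 i2.
rewrite -/(trace D cprice cstop adv T) -/tr in i1 i2 i3.
split; first lia.
have hs : size tr = T by rewrite /tr /trace size_run.
rewrite (regret_split v D hs) leaf_sum.
have hn := nonleaf_bound D hv1 i3.
have hc' : (count (predC (leafr D)) tr <= 3 * D + 6 * C + 3 * NT v tr)%N by lia.
move: hc'; rewrite -(ler_nat R) !natrD => hc'.

lra.
Qed.
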